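(* Let $\kappa$ be a regular uncountable cardinal and $J$ a $\kappa$-complete ideal on $\kappa$. (i) Suppose that $\clubsuit_\kappa^{{\rm cof}/\sigma, -/\tau}[J]$ holds, where $\sigma < \kappa$ is an infinite cardinal with $\kappa^\sigma = \kappa$ and $\tau$ is a cardinal with $1 \leq \tau < \kappa$. Then $\clubsuit_\kappa^{-/\tau}[J]$ holds. (ii) Suppose that $\clubsuit_\kappa^{{\rm cof}/\sigma, -}[J]$ holds, where $\sigma < \kappa$ is an infinite cardinal with $\kappa^\sigma = \kappa$. Then $\clubsuit_\kappa^-[J]$ holds.
   Context: An ideal on $\kappa$ is a nonempty $J \subseteq P(\kappa)$ with $\kappa \notin J$, every bounded subset of $\kappa$ in $J$, $J$ closed under subsets and under unions of two members; $J^+ = P(\kappa)\setminus J$; $\kappa$-complete means closed under unions of fewer than $\kappa$ members. $P_\sigma(X) = \{x \subseteq X : |x| < \sigma\}$; $[\kappa]^\kappa$ is the set of size-$\kappa$ subsets of $\kappa$; $acc(\kappa)$ is the set of nonzero limit ordinals below $\kappa$. $\clubsuit_\kappa^{{\rm cof}/\sigma,-/\tau}[J]$: there are $B^i_\delta \in P_\sigma(\delta)$ for $\delta < \kappa$, $i < \tau$, such that for every $W \in [\kappa]^\kappa$, $\{\delta < \kappa : \exists i < \tau\,(\sup(W \cap B^i_\delta) = \delta)\} \in J^+$. $\clubsuit_\kappa^{{\rm cof}/\sigma,-}[J]$: there are $B^i_\delta \in P_\sigma(\delta)$ for $i < \delta < \kappa$ such that for every $W \in [\kappa]^\kappa$,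 $\{\delta < \kappa : \exists i < \delta\,(\sup(W \cap B^i_\delta) = \delta)\} \in J^+$. $\clubsuit_\kappa^{-/\tau}[J]$: there are $B^i_\delta \subseteq \delta$ with $\sup B^i_\delta = \delta$ for $\delta \in acc(\kappa)$, $i < \tau$, such that $\{\delta \in acc(\kappa) : \exists i < \tau\,(B^i_\delta \subseteq W)\} \in J^+$ for every $W \in [\kappa]^\kappa$. $\clubsuit_\kappa^-[J]$: the same with $i < \delta$ in place of $i < \tau$ (the sets indexed by $\delta \in acc(\kappa)$ and $i < \delta$). *)

(* Defs.v *)
(* Cardinals are modelled by types (cardinality comparison via
   injections); the cardinal kappa is modelled by a type K carrying a
   well-order [lt] of order type kappa (an initial ordinal), so that the
   ordinals below kappa are the elements of K. *)
Set Implicit Arguments.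

Definition injective {A B : Type} (f : A -> B) : Prop :=
  forall x y, f x = f y -> x = y.
Definition inj_le (A B : Type) : Prop := exists f : A -> B, injective f.
Definition card_lt (A B : Type) : Prop := ~ inj_le B A.

Definition sub {K : Type} (X : K -> Prop) : Type := { y : K | X y }.

Record is_well_order {K : Type} (lt : K -> K -> Prop) : Prop := {
  wo_irrefl : forall x, ~ lt x x;
  wo_trans : forall x y z, lt x y -> lt y z -> lt x z;
  wo_total : forall x y, lt x y \/ x = y \/ lt y x;
  wo_wf : well_founded lt }.

Definition le {K : Type} (lt : K -> K -> Prop) (x y : K) : Prop := lt x y \/ x = y.

Definition bounded {K : Type} (lt : K -> K -> Prop) (X : K -> Prop) : Prop :=
  exists b, forall y, X y -> lt y b.

Definition is_cardinal_order {K : Type} (lt : K -> K -> Prop) : Prop :=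
  is_well_order lt /\ forall x : K, card_lt (sub (fun y => lt y x)) K.

Definition regular {K : Type} (lt : K -> K -> Prop) : Prop :=
  forall X : K -> Prop, ~ bounded lt X -> inj_le K (sub X).

Definition uncountable (K : Type) : Prop := card_lt nat K.

Definition regular_uncountable_cardinal {K : Type} (lt : K -> K -> Prop) : Prop :=
  is_cardinal_order lt /\ regular lt /\ uncountable K.

Definition is_ideal {K : Type} (lt : K -> K -> Prop) (J : (K -> Prop) -> Prop) : Prop :=
  (exists A, J A) /\
  ~ J (fun _ => True) /\
  (forall X, bounded lt X -> J X) /\
  (forall X Y, J Y -> (forall x, X x -> Y x) -> J X) /\
  (forall X Y, J X -> J Y -> J (fun x => X x \/ Y x)).

Definition kappa_complete {K : Type} (J : (K -> Prop) -> Prop) : Prop :=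
  forall (I : Type) (A : I -> K -> Prop),
    card_lt I K -> (forall i, J (A i)) -> J (fun x => exists i, A i x).

Definition Jpos {K : Type} (J : (K -> Prop) -> Prop) (X : K -> Prop) : Prop := ~ J X.

Definition sup_eq {K : Type} (lt : K -> K -> Prop) (X : K -> Prop) (delta : K) : Prop :=
  (forall x, X x -> le lt x delta) /\
  (forall g, (forall x, X x -> le lt x g) -> le lt delta g).

Definition P_sigma {K : Type} (S : Type) (lt : K -> K -> Prop) (delta : K) (B : K -> Prop) : Prop :=
  (forall x, B x -> lt x delta) /\ card_lt (sub B) S.

Definition size_kappa {K : Type} (W : K -> Prop) : Prop := inj_le K (sub W).

Definition acc {K : Type} (lt : K -> K -> Prop) (delta : K) : Prop :=
  (exists g, lt g delta) /\ forall g, lt g delta -> exists b, lt g b /\ lt b delta.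

Definition clubsuit_cof_tau {K : Type} (lt : K -> K -> Prop) (J : (K -> Prop) -> Prop)
    (S Tau : Type) : Prop :=
  exists B : K -> Tau -> K -> Prop,
    (forall delta i, P_sigma S lt delta (B delta i)) /\
    forall W : K -> Prop, size_kappa W ->
      Jpos J (fun delta => exists i : Tau, sup_eq lt (fun x => W x /\ B delta i x) delta).

Definition clubsuit_cof {K : Type} (lt : K -> K -> Prop) (J : (K -> Prop) -> Prop)
    (S : Type) : Prop :=
  exists B : K -> K -> K -> Prop,
    (forall delta i, lt i delta -> P_sigma S lt delta (B delta i)) /\
    forall W : K -> Prop, size_kappa W ->
      Jpos J (fun delta => exists i, lt i delta /\ sup_eq lt (fun x => W x /\ B delta i x) delta).

Definition clubsuit_tau {K : Type} (lt : K -> K -> Prop) (J : (K -> Prop) -> Prop)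
    (Tau : Type) : Prop :=
  exists B : K -> Tau -> K -> Prop,
    (forall delta i, acc lt delta ->
        (forall x, B delta i x -> lt x delta) /\ sup_eq lt (B delta i) delta) /\
    forall W : K -> Prop, size_kappa W ->
      Jpos J (fun delta => acc lt delta /\ exists i : Tau, forall x, B delta i x -> W x).

Definition clubsuit_minus {K : Type} (lt : K -> K -> Prop) (J : (K -> Prop) -> Prop) : Prop :=
  exists B : K -> K -> K -> Prop,
    (forall delta i, acc lt delta -> lt i delta ->
        (forall x, B delta i x -> lt x delta) /\ sup_eq lt (B delta i) delta) /\
    forall W : K -> Prop, size_kappa W ->
      Jpos J (fun delta => acc lt delta /\ exists i, lt i delta /\ forall x, B delta i x -> W x).

(* sigma < kappa infinite with kappa^sigma = kappa (|S -> K| <= |K|; the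
   reverse inequality is automatic) *)
Definition good_sigma (K S : Type) : Prop :=
  inj_le nat S /\ card_lt S K /\ inj_le (S -> K) K.

Definition good_tau (K Tau : Type) : Prop :=
  inhabited Tau /\ card_lt Tau K.

(* Main.v *)
Require Import Defs.
From Stdlib Require Import Classical ClassicalEpsilon FunctionalExtensionality Wellfounded.

Lemma sub_eq {K : Type} (X : K -> Prop) (a b : sub X) :
  proj1_sig a = proj1_sig b -> a = b.
Proof.
  destruct a as [a Ha], b as [b Hb]; simpl; intros ->.
  f_equal; apply proof_irrelevance.
Qed.

Lemma size_unbounded {K : Type} (lt : K -> K -> Prop) :
  is_cardinal_order lt -> forall W : K -> Prop, inj_le K (sub W) ->
  forall b, exists w, W w /\ ~ lt w b.
Proof.
  intros [Hwo Hinit] W [f Hf] b.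
  apply NNPP; intro Hn.
  assert (H : forall w, W w -> lt w b).
  { intros w Hw; apply NNPP; intro H; apply Hn; exists w; auto. }
  apply (Hinit b).
  exists (fun k => exist (fun y => lt y b) (proj1_sig (f k)) (H _ (proj2_sig (f k)))).
  intros x y Hxy. apply Hf. apply sub_eq.
  apply (f_equal (@proj1_sig _ _)) in Hxy. simpl in Hxy. exact Hxy.
Qed.

Lemma bounded_image {K : Type} (lt : K -> K -> Prop) :
  regular lt -> forall (A : Type) (phi : A -> K), card_lt A K ->
  exists b, forall a, lt (phi a) b.
Proof.
  intros Hreg A phi HA.
  apply NNPP; intro Hn.
  assert (Hnb : ~ bounded lt (fun x => exists a, x = phi a)).
  { intros [b Hb]. apply Hn. exists b. intro a. apply Hb. exists a. reflexivity. }
  destruct (Hreg _ Hnb) as [f Hf].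
  apply HA.
  exists (fun k => proj1_sig (constructive_indefinite_description _ (proj2_sig (f k)))).
  intros x y Hxy.
  apply Hf. apply sub_eq. revert Hxy.
  destruct (constructive_indefinite_description _ (proj2_sig (f x))) as [ax Hax].
  destruct (constructive_indefinite_description _ (proj2_sig (f y))) as [ay Hay].
  simpl. intros ->. rewrite Hax, Hay. reflexivity.
Qed.

Lemma sup_lt {K : Type} (lt : K -> K -> Prop) (d : K) :
  is_well_order lt -> acc lt d -> sup_eq lt (fun x => lt x d) d.
Proof.
  intros Hwo [_ Hacc]. split.
  - intros x Hx; left; exact Hx.
  - intros g Hg. destruct (wo_total Hwo g d) as [Hgd|[->|Hdg]].
    + destruct (Hacc g Hgd) as [b [Hgb Hbd]].
      destruct (Hg b Hbd) as [Hbg| ->].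
      * exfalso; apply (wo_irrefl Hwo g); apply (wo_trans Hwo _ _ _ Hgb Hbg).
      * exfalso; apply (wo_irrefl Hwo g); exact Hgb.
    + right; reflexivity.
    + left; exact Hdg.
Qed.

Lemma sup_ext {K : Type} (lt : K -> K -> Prop) (X Y : K -> Prop) d :
  (forall x, X x <-> Y x) -> sup_eq lt X d -> sup_eq lt Y d.
Proof.
  intros HXY [H1 H2]. split.
  - intros x Hx; apply H1, HXY, Hx.
  - intros g Hg; apply H2; intros x Hx; apply Hg, HXY, Hx.
Qed.

Definition validC {K Ix : Type} (lt : K -> K -> Prop) (valid : K -> Ix -> Prop)
  (C : K -> Ix -> K -> Prop) : Prop :=
  forall delta i, acc lt delta -> valid delta i ->
    (forall x, C delta i x -> lt x delta) /\ sup_eq lt (C delta i) delta.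

Definition Gs {K Ix : Type} (lt : K -> K -> Prop) (valid : K -> Ix -> Prop)
  (C : K -> Ix -> K -> Prop) (W : K -> Prop) : K -> Prop :=
  fun delta => acc lt delta /\ exists i, valid delta i /\ forall x, C delta i x -> W x.

Definition Qd {K Ix : Type} (lt : K -> K -> Prop) (D : K -> Ix -> K -> Prop) delta i : Prop :=
  (forall x, D delta i x -> lt x delta) /\ sup_eq lt (D delta i) delta.

Definition mkC {K Ix : Type} (lt : K -> K -> Prop) (D : K -> Ix -> K -> Prop) :
  K -> Ix -> K -> Prop :=
  fun delta i x => (Qd lt D delta i /\ D delta i x) \/ (~ Qd lt D delta i /\ lt x delta).

Lemma mkC_valid {K Ix : Type} (lt : K -> K -> Prop) (valid : K -> Ix -> Prop) D :
  is_well_order lt -> validC lt valid (mkC lt D).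
Proof.
  intros Hwo d i Hacc _. destruct (classic (Qd lt D d i)) as [HQ|HQ].
  - split.
    + intros x [[_ Hx]|[Hn _]]; [apply (proj1 HQ), Hx | contradiction].
    + apply (sup_ext lt (D d i)); [|apply (proj2 HQ)].
      intro x; unfold mkC; split; [intro; left; auto | intros [[_ Hx]|[Hn _]]; [auto|contradiction]].
  - split.
    + intros x [[Hq _]|[_ Hx]]; [contradiction | exact Hx].
    + apply (sup_ext lt (fun x => lt x d)); [|apply sup_lt; auto].
      intro x; unfold mkC; split; [intro; right; auto | intros [[Hq _]|[_ Hx]]; [contradiction|auto]].
Qed.

Lemma mkC_Q {K Ix : Type} (lt : K -> K -> Prop) D d (i : Ix) :
  Qd lt D d i -> forall x, mkC lt D d i x -> D d i x.
Proof. intros HQ x [[_ Hx]|[Hn _]]; [exact Hx | contradiction]. Qed.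

Lemma main_gen (K : Type) (lt : K -> K -> Prop) (J : (K -> Prop) -> Prop)
  (Ix : Type) (valid : K -> Ix -> Prop) (S : Type) :
  regular_uncountable_cardinal lt -> is_ideal lt J -> kappa_complete J -> good_sigma K S ->
  (exists B : K -> Ix -> K -> Prop,
     (forall d i, valid d i -> P_sigma S lt d (B d i)) /\
     forall W, size_kappa W ->
       Jpos J (fun d => exists i, valid d i /\ sup_eq lt (fun x => W x /\ B d i x) d)) ->
  exists C : K -> Ix -> K -> Prop, validC lt valid C /\
    forall W, size_kappa W -> Jpos J (Gs lt valid C W).
Proof.
  intros [[Hwo Hinit] [Hreg Hunc]] [_ [HnT [Hbdd [Hsub Hun]]]] Hcomp [[nS HnS] [HSK [g Hg]]]
    [B [HBs HBg]].
  assert (Hcard : is_cardinal_order lt) by (split; auto).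
  apply NNPP; intro Hno.
  assert (Hfail : forall C, validC lt valid C -> exists W, size_kappa W /\ J (Gs lt valid C W)).
  { intros C HC. apply NNPP; intro H'. apply Hno. exists C. split; auto.
    intros W HW HJ. apply H'. exists W; auto. }
  assert (HK2 : exists k0 k1 : K, k0 <> k1).
  { apply NNPP; intro H. apply Hunc. exists (fun _ => 0). intros x y _.
    apply NNPP; intro Hxy; apply H; exists x, y; auto. }
  destruct HK2 as [k0 [k1 Hk01]].
  pose proof (inhabits k0) as inhK.
  set (s0 := nS 0). set (s1 := nS 1).
  assert (Hs01 : s0 <> s1) by (intro H; apply HnS in H; discriminate).
  set (fS := fun s : S => g (fun t => if excluded_middle_informative (t = s) then k1 else k0)).
  assert (HfS : forall a b, fS a = fS b -> a = b).
  { intros a b H. apply Hg in H. apply (f_equal (fun h => h a)) in H.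
    destruct (excluded_middle_informative (a = a)) as [_|C]; [|exfalso; auto].
    destruct (excluded_middle_informative (a = b)) as [E|_]; [exact E|exfalso; auto]. }
  set (c := fun (k : K) (s : S -> K) =>
              g (fun t => if excluded_middle_informative (t = s0) then k else g s)).
  assert (Hc : forall k s k' s', c k s = c k' s' -> k = k' /\ s = s').
  { intros k s k' s' H. apply Hg in H.
    pose proof (f_equal (fun h => h s0) H) as H0. pose proof (f_equal (fun h => h s1) H) as H1.
    simpl in H0, H1.
    destruct (excluded_middle_informative (s0 = s0)) as [_|C]; [|exfalso; auto].
    destruct (excluded_middle_informative (s1 = s0)) as [E|_]; [exfalso; auto|].
    split; [exact H0|apply Hg; exact H1]. }
  pose proof (inhabits (fun _ : S => k0)) as inhF.
  set (X := fun xi : K => epsilon inhF (fun s => exists k, c k s = xi)).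
  assert (HXc : forall k s, X (c k s) = s).
  { intros k s. unfold X.
    destruct (epsilon_spec inhF (fun s' => exists k', c k' s' = c k s) (ex_intro _ s (ex_intro _ k eq_refl)))
      as [k' Hk'].
    apply Hc in Hk'. apply Hk'. }
  assert (HX : forall s rho, exists xi, ~ lt xi rho /\ X xi = s).
  { intros s rho.
    destruct (size_unbounded lt Hcard (fun xi => exists k, xi = c k s)) with (b := rho)
      as [xi [[k ->] Hxi]].
    - exists (fun k => exist (fun xi => exists k', xi = c k' s) (c k s) (ex_intro _ k eq_refl)).
      intros a b H. apply (f_equal (@proj1_sig _ _)) in H. simpl in H. apply Hc in H. apply H.
    - exists (c k s). split; auto. }

  set (sl := fun a b : S => lt (fS a) (fS b)).
  assert (wfS : well_founded sl) by exact (wf_inverse_image S K lt fS (wo_wf Hwo)).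
  assert (totS : forall a b, sl a b \/ a = b \/ sl b a).
  { intros a b. destruct (wo_total Hwo (fS a) (fS b)) as [H|[H|H]]; auto. }
  pose proof (inhabits (fun _ : K => True)) as inhW.
  set (Fail := fun C => epsilon inhW (fun W => validC lt valid C -> size_kappa W /\ J (Gs lt valid C W))).
  assert (HFail : forall D, size_kappa (Fail (mkC lt D)) /\ J (Gs lt valid (mkC lt D) (Fail (mkC lt D)))).
  { intro D. unfold Fail.
    apply (epsilon_spec inhW (fun W => validC lt valid (mkC lt D) -> size_kappa W /\ J (Gs lt valid (mkC lt D) W))).
    - destruct (Hfail (mkC lt D) (mkC_valid lt valid D Hwo)) as [W HW]. exists W; auto.
    - apply mkC_valid; exact Hwo. }
  set (Dgen := fun (y : S) (P : K -> Prop) (d : K) (i : Ix) (x : K) =>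
         lt x d /\ exists xi, B d i xi /\ P xi /\ x = X xi y).
  set (Fw := fun (y : S) (rec : forall y', sl y' y -> K -> Prop) =>
         Fail (mkC lt (Dgen y (fun xi => forall y' (H : sl y' y), rec y' H (X xi y'))))).
  set (Wt := Fix wfS (fun _ => K -> Prop) Fw).
  set (Py := fun y xi => forall y', sl y' y -> Wt y' (X xi y')).
  set (Ct := fun y => mkC lt (Dgen y (Py y))).
  assert (HWeq : forall y, Wt y = Fail (Ct y)).
  { intro y. unfold Wt. rewrite Fix_eq.
    - reflexivity.
    - intros y0 f1 f2 Hf. unfold Fw.
      assert (E : f1 = f2).
      { apply functional_extensionality_dep; intro y'.
        apply functional_extensionality_dep; intro H. apply Hf. }
      rewrite E. reflexivity. }
  assert (HWsize : forall y, size_kappa (Wt y)).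
  { intro y. rewrite HWeq. apply HFail. }
  assert (HWJ : forall y, J (Gs lt valid (Ct y) (Wt y))).
  { intro y. rewrite HWeq. apply HFail. }

  assert (Hr : forall beta, exists xi, forall y,
             Wt y (X xi y) /\ lt (X xi y) xi /\ ~ lt (X xi y) beta).
  { intro beta.
    set (sf := fun y => epsilon inhK (fun w => Wt y w /\ ~ lt w beta)).
    assert (Hsf : forall y, Wt y (sf y) /\ ~ lt (sf y) beta).
    { intro y. unfold sf. apply (epsilon_spec inhK (fun w => Wt y w /\ ~ lt w beta)).
      apply (size_unbounded lt Hcard (Wt y) (HWsize y) beta). }
    destruct (bounded_image lt Hreg S sf HSK) as [rho Hrho].
    destruct (HX sf rho) as [xi [Hxi Exi]].
    exists xi. intro y. rewrite Exi. split; [apply Hsf|split; [|apply Hsf]].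
    destruct (wo_total Hwo xi rho) as [H|[H|H]].
    - contradiction.
    - subst; apply Hrho.
    - apply (wo_trans Hwo _ _ _ (Hrho y) H). }
  set (rfun := fun beta => epsilon inhK (fun xi => forall y,
             Wt y (X xi y) /\ lt (X xi y) xi /\ ~ lt (X xi y) beta)).
  assert (Hrfun : forall beta y, Wt y (X (rfun beta) y) /\ lt (X (rfun beta) y) (rfun beta)
                                 /\ ~ lt (X (rfun beta) y) beta).
  { intro beta. unfold rfun.
    apply (epsilon_spec inhK (fun xi => forall y,
             Wt y (X xi y) /\ lt (X xi y) xi /\ ~ lt (X xi y) beta)). apply Hr. }
  set (bdf := fun Xs : K -> Prop => epsilon inhK (fun b => forall x, Xs x -> lt x b)).
  set (Fh := fun (a : K) (rec : forall a', lt a' a -> K) =>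
         rfun (bdf (fun x => exists a' (H : lt a' a), x = rec a' H))).
  set (h := Fix (wo_wf Hwo) (fun _ => K) Fh).
  assert (Heqh : forall a, h a = rfun (bdf (fun x => exists a' (H : lt a' a), x = h a'))).
  { intro a. unfold h. rewrite Fix_eq.
    - reflexivity.
    - intros a0 f1 f2 Hf. unfold Fh.
      assert (E : f1 = f2).
      { apply functional_extensionality_dep; intro y'.
        apply functional_extensionality_dep; intro H. apply Hf. }
      rewrite E. reflexivity. }
  assert (Hh : forall a, (forall y, Wt y (X (h a) y) /\ lt (X (h a) y) (h a)) /\
                         (forall a', lt a' a -> forall y, lt (h a') (X (h a) y))).
  { intro a.
    set (hb := bdf (fun x => exists a' (H : lt a' a), x = h a')).
    assert (Hhb : forall a', lt a' a -> lt (h a') hb).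
    { intros a' Ha'. unfold hb, bdf.
      apply (epsilon_spec inhK (fun b => forall x, (exists a' (H : lt a' a), x = h a') -> lt x b)
               ) with (x := h a').
      - destruct (bounded_image lt Hreg (sub (fun y => lt y a)) (fun z => h (proj1_sig z)) (Hinit a))
          as [b Hb].
        exists b. intros x [a'' [H ->]]. apply (Hb (exist _ a'' H)).
      - exists a', Ha'. reflexivity. }
    assert (E : h a = rfun hb) by apply Heqh.
    rewrite E. split.
    - intro y. split; apply Hrfun.
    - intros a' Ha' y. destruct (Hrfun hb y) as [_ [_ Hn]].
      destruct (wo_total Hwo (X (rfun hb) y) hb) as [H|[H|H]].
      + contradiction.
      + rewrite H. apply Hhb; exact Ha'.
      + apply (wo_trans Hwo _ _ _ (Hhb a' Ha') H). }
  assert (Hinc : forall a a', lt a' a -> lt (h a') (h a)).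
  { intros a a' H. apply (wo_trans Hwo _ (X (h a) s0)); [apply (proj2 (Hh a)); auto | apply (proj1 (Hh a))]. }
  assert (Hhinj : forall a b, h a = h b -> a = b).
  { intros a b E. destruct (wo_total Hwo a b) as [H|[H|H]]; auto.
    - apply Hinc in H. rewrite E in H. exfalso; apply (wo_irrefl Hwo _ H).
    - apply Hinc in H. rewrite E in H. exfalso; apply (wo_irrefl Hwo _ H). }

  set (Wstar := fun xi => exists a, xi = h a).
  assert (HWs : size_kappa Wstar).
  { exists (fun a => exist Wstar (h a) (ex_intro _ a eq_refl)).
    intros a b E. apply (f_equal (@proj1_sig _ _)) in E. simpl in E. apply Hhinj; exact E. }
  apply (HBg Wstar HWs).
  set (U := fun d => exists y : S, Gs lt valid (Ct y) (Wt y) d).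
  assert (HU : J U) by (apply (Hcomp S (fun y => Gs lt valid (Ct y) (Wt y))); auto).
  set (Min := fun d => forall g0, ~ lt g0 d).
  assert (HMin : J Min).
  { destruct (classic (bounded lt Min)) as [Hb|Hb]; [apply Hbdd; exact Hb|].
    destruct (Hreg Min Hb) as [f Hf]. exfalso. apply Hk01. apply Hf. apply sub_eq.
    destruct (f k0) as [m0 Hm0], (f k1) as [m1 Hm1]. simpl.
    destruct (wo_total Hwo m0 m1) as [H|[H|H]]; auto.
    - exfalso; apply (Hm1 _ H).
    - exfalso; apply (Hm0 _ H). }
  apply (Hsub _ (fun d => Min d \/ U d)); [apply Hun; auto|].
  intros d [i [Hv Hsup]].
  destruct (classic (Min d)) as [HM|HnM]; [left; exact HM|right].
  destruct (HBs d i Hv) as [HBd HBc].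
  assert (Hab : forall g0, lt g0 d -> exists xi, Wstar xi /\ B d i xi /\ lt g0 xi /\ lt xi d).
  { intros g0 Hg0. apply NNPP; intro Hn.
    assert (Hle : forall x, Wstar x /\ B d i x -> le lt x g0).
    { intros x [Hx1 Hx2]. destruct (wo_total Hwo x g0) as [H|[H|H]].
      - left; exact H.
      - right; exact H.
      - exfalso; apply Hn. exists x; auto. }
    destruct (proj2 Hsup g0 Hle) as [H|H].
    - apply (wo_irrefl Hwo g0), (wo_trans Hwo _ _ _ Hg0 H).
    - subst. apply (wo_irrefl Hwo _ Hg0). }
  assert (Hacc : acc lt d).
  { split.
    - apply NNPP; intro H. apply HnM. intros g0 Hg0. apply H. exists g0; exact Hg0.
    - intros g0 Hg0. destruct (Hab g0 Hg0) as [xi [_ [_ [H1 H2]]]]. exists xi; auto. }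
  assert (Hy : exists y, forall xi, B d i xi -> Py y xi -> Wt y (X xi y)).
  { apply NNPP; intro Hn.
    assert (Hall : forall y, exists xi, B d i xi /\ Py y xi /\ ~ Wt y (X xi y)).
    { intro y. apply NNPP; intro H2. apply Hn. exists y. intros xi HB HP.
      apply NNPP; intro H3. apply H2. exists xi; auto. }
    set (xf := fun y => epsilon inhK (fun xi => B d i xi /\ Py y xi /\ ~ Wt y (X xi y))).
    assert (Hxf : forall y, B d i (xf y) /\ Py y (xf y) /\ ~ Wt y (X (xf y) y)).
    { intro y. apply (epsilon_spec inhK (fun xi => B d i xi /\ Py y xi /\ ~ Wt y (X xi y))).
      apply Hall. }
    apply HBc. exists (fun y => exist (B d i) (xf y) (proj1 (Hxf y))).
    intros a b E. apply (f_equal (@proj1_sig _ _)) in E. simpl in E.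
    destruct (totS a b) as [H|[H|H]]; auto.
    - exfalso. destruct (Hxf a) as [_ [_ Ha]]. destruct (Hxf b) as [_ [Hb _]].
      apply Ha. rewrite E. apply Hb; exact H.
    - exfalso. destruct (Hxf b) as [_ [_ Hb]]. destruct (Hxf a) as [_ [Ha _]].
      apply Hb. rewrite <- E. apply Ha; exact H. }
  destruct Hy as [y Hy].
  assert (HQ : Qd lt (Dgen y (Py y)) d i).
  { split.
    - intros x [Hx _]; exact Hx.
    - split.
      + intros x [Hx _]; left; exact Hx.
      + intros g0 Hg0. destruct (wo_total Hwo g0 d) as [H|[H|H]].
        * exfalso.
          destruct (Hab g0 H) as [xi1 [[a1 E1] [_ [Hg1 Hd1]]]].
          destruct (Hab xi1 Hd1) as [xi2 [[a2 E2] [HB2 [H12 Hd2]]]].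
          assert (Ha12 : lt a1 a2).
          { destruct (wo_total Hwo a1 a2) as [Ha|[Ha|Ha]]; auto.
            - subst. exfalso; apply (wo_irrefl Hwo _ H12).
            - exfalso. apply Hinc in Ha. subst.
              apply (wo_irrefl Hwo _ (wo_trans Hwo _ _ _ Ha H12)). }
          assert (Hx1 : lt xi1 (X xi2 y)) by (subst; apply (proj2 (Hh a2)); auto).
          assert (Hx2 : lt (X xi2 y) xi2) by (subst; apply (proj1 (Hh a2))).
          assert (HD : Dgen y (Py y) d i (X xi2 y)).
          { split; [apply (wo_trans Hwo _ _ _ Hx2 Hd2)|].
            exists xi2. split; [exact HB2|split; [|reflexivity]].
            intros y' _. subst. apply (proj1 (Hh a2)). }
          destruct (Hg0 _ HD) as [Hl|Hl].
          -- apply (wo_irrefl Hwo g0).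
             apply (wo_trans Hwo _ _ _ Hg1 (wo_trans Hwo _ _ _ Hx1 Hl)).
          -- rewrite Hl in Hx1. apply (wo_irrefl Hwo g0), (wo_trans Hwo _ _ _ Hg1 Hx1).
        * right; symmetry; exact H.
        * left; exact H. }
  exists y. split; [exact Hacc|]. exists i. split; [exact Hv|].
  intros x Hx. apply (mkC_Q lt _ d i HQ) in Hx.
  destruct Hx as [_ [xi [HB [HP ->]]]]. apply Hy; auto.
Qed.


Theorem proposition3p15 (K : Type) (lt : K -> K -> Prop) (J : (K -> Prop) -> Prop) :
  regular_uncountable_cardinal lt ->
  is_ideal lt J -> kappa_complete J ->
  (forall (S Tau : Type), good_sigma K S -> good_tau K Tau ->
     clubsuit_cof_tau lt J S Tau -> clubsuit_tau lt J Tau) /\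
  (forall S : Type, good_sigma K S ->
     clubsuit_cof lt J S -> clubsuit_minus lt J).
Proof.
  intros Hk Hid Hcomp. pose proof Hid as [_ [_ [_ [Hsub _]]]]. split.
  - intros S Tau HS _ [B [HB1 HB2]].
    destruct (main_gen K lt J Tau (fun _ _ => True) S Hk Hid Hcomp HS) as [C [HC1 HC2]].
    + exists B. split; [intros; apply HB1|].
      intros W HW HJ. apply (HB2 W HW). apply (Hsub _ _ HJ).
      intros d [i Hi]. exists i; split; auto.
    + exists C. split.
      * intros d i Hacc. apply HC1; auto.
      * intros W HW HJ. apply (HC2 W HW). apply (Hsub _ _ HJ).
        intros d [Hacc [i [_ Hi]]]. split; [exact Hacc|]. exists i; exact Hi.
  - intros S HS [B [HB1 HB2]].
    destruct (main_gen K lt J K (fun d i => lt i d) S Hk Hid Hcomp HS) as [C [HC1 HC2]].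
    + exists B. split; [exact HB1|exact HB2].
    + exists C. split.
      * intros d i Hacc Hi. apply HC1; auto.
      * intros W HW. apply (HC2 W HW).
Qed.
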